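(* In the unit-demand mechanism with an arbitrary discount function $\alpha:[0,1]\to[0,1]$ (described in the context), for every buyer $i$, every item $j$ and every $t\in[0,1]$, $$\Pr_{\mathbf v,\mathbf T}[\,j \text{ not sold before } t \mid T_i=t\,]\ \ge\ q_j(t).$$
   Context: Unit-demand setting: $n$ buyers, $m$ items; buyer $i$ has a random nonnegative value vector $(v_{ij})_j$, independent across buyers, and arrives at an independent time $T_i$ uniform on $[0,1]$. Nonnegative base prices $b_j$ are fixed. Mechanism: at time $t$ each unsold item $j$ has price $\alpha(t)b_j$; a buyer arriving at time $t$ buys an unsold item maximizing $v_{ij}-\alpha(t)b_j$ if the maximum is nonnegative (ties broken by a fixed deterministic rule), else buys nothing. $q_j(t)$ denotes the unconditional probability (over $\mathbf v,\mathbf T$) that item $j$ has not been sold before time $t$. *)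

(* Defs.v *)
From HB Require Import structures.
From mathcomp Require Import all_boot all_order all_algebra perm.
From mathcomp Require Import all_classical all_reals all_analysis.
Set Implicit Arguments. Unset Strict Implicit. Unset Printing Implicit Defensive.
Import Order.TTheory GRing.Theory Num.Theory.
Local Open Scope classical_set_scope.
Local Open Scope ring_scope.

Definition util (R : realType) (m : nat) (alpha : R -> R) (b : 'I_m -> R)
  (w : 'I_m -> R) (tk : R) (j : 'I_m) : R := w j - alpha tk * b j.

Definition select (R : realType) (m : nat) (alpha : R -> R) (b : 'I_m -> R)
  (pr : {perm 'I_m}) (w : 'I_m -> R) (tk : R) (S : {set 'I_m}) : option 'I_m :=
  let M := [set j in S | [forall j' in S,
              util alpha b w tk j' <= util alpha b w tk j]] in
  [pick j in M | [forall j' in M, (nat_of_ord (pr j) <= nat_of_ord (pr j'))%N]].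

Definition step (R : realType) (n m : nat) (alpha : R -> R) (b : 'I_m -> R)
  (pr : 'I_n -> {perm 'I_m}) (tau : 'I_n -> R) (v : 'I_n -> 'I_m -> R)
  (S : {set 'I_m}) (k : 'I_n) : {set 'I_m} :=
  match select alpha b (pr k) (v k) (tau k) S with
  | Some j => if 0 <= util alpha b (v k) (tau k) j then S :\ j else S
  | None => S
  end.

(* arrival order: by arrival time, (measure-zero) ties broken by index *)
Definition arrives_before (R : realType) (n : nat) (tau : 'I_n -> R)
  (a c : 'I_n) : bool :=
  (tau a < tau c) || ((tau a == tau c) && (nat_of_ord a <= nat_of_ord c)%N).

Definition arrivals_before (R : realType) (n : nat) (tau : 'I_n -> R) (t : R)
  : seq 'I_n :=
  sort (arrives_before tau) [seq k <- enum 'I_n | tau k < t].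

Definition unsold_before (R : realType) (n m : nat) (alpha : R -> R)
  (b : 'I_m -> R) (pr : 'I_n -> {perm 'I_m}) (tau : 'I_n -> R)
  (v : 'I_n -> 'I_m -> R) (t : R) : {set 'I_m} :=
  foldl (step alpha b pr tau v) (finset.setT : {set 'I_m}) (arrivals_before tau t).

(* mutual independence of the value vectors (v i)_i and the arrival times
   (T i)_i: product rule on all (generating) rectangle events *)
Definition indep_model d (Omega : measurableType d) (R : realType)
  (P : probability Omega R) (n m : nat)
  (v : 'I_n -> 'I_m -> Omega -> R) (T : 'I_n -> Omega -> R) : Prop :=
  forall (A : 'I_n -> 'I_m -> set R) (B : 'I_n -> set R),
    (forall i j, measurable (A i j)) -> (forall i, measurable (B i)) ->
    P (\bigcap_(i in [set: 'I_n])
         ((\bigcap_(j in [set: 'I_m]) (v i j @^-1` A i j)) `&` (T i @^-1` B i)))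
    = ((\prod_(i < n) P (\bigcap_(j in [set: 'I_m]) (v i j @^-1` A i j)))
       * (\prod_(i < n) P (T i @^-1` B i)))%E.

Definition uniform01 d (Omega : measurableType d) (R : realType)
  (P : probability Omega R) (X : Omega -> R) : Prop :=
  forall B : set R, measurable B ->
    P (X @^-1` B) = (@lebesgue_measure R) (B `&` [set x : R | 0 <= x <= 1]).

Definition q_unsold d (Omega : measurableType d) (R : realType)
  (P : probability Omega R) (n m : nat) (alpha : R -> R) (b : 'I_m -> R)
  (pr : 'I_n -> {perm 'I_m}) (v : 'I_n -> 'I_m -> Omega -> R)
  (T : 'I_n -> Omega -> R) (j : 'I_m) (t : R) : \bar R :=
  P [set w | j \in unsold_before alpha b pr (fun k => T k w)
                                 (fun k l => v k l w) t].

(* Pr[item j not sold before t | T_i = t]: by independence of T_i from the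
   rest, the (regular) conditional law is obtained by fixing T_i := t *)
Definition q_unsold_given_arrival d (Omega : measurableType d) (R : realType)
  (P : probability Omega R) (n m : nat) (alpha : R -> R) (b : 'I_m -> R)
  (pr : 'I_n -> {perm 'I_m}) (v : 'I_n -> 'I_m -> Omega -> R)
  (T : 'I_n -> Omega -> R) (i : 'I_n) (j : 'I_m) (t : R) : \bar R :=
  P [set w | j \in unsold_before alpha b pr
                     (fun k => if k == i then t else T k w)
                     (fun k l => v k l w) t].

(* Main.v *)
Require Import Defs.
From HB Require Import structures.
From mathcomp Require Import all_boot all_order all_algebra perm.
From mathcomp Require Import all_classical all_reals all_analysis.
Import Order.TTheory GRing.Theory Num.Theory.
Local Open Scope classical_set_scope.
Local Open Scope ring_scope.

Section Sel.
Variables (R : realType) (m : nat) (alpha : R -> R) (b : 'I_m -> R)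
  (pr : {perm 'I_m}) (w : 'I_m -> R) (tk : R).
Local Notation u := (util alpha b w tk).
Local Notation sel := (select alpha b pr w tk).

Lemma sel_some (S : {set 'I_m}) y : sel S = Some y -> y \in S /\ forall j', j' \in S -> u j' <= u y.
Proof.
rewrite /select; case: pickP => // z /andP[zM _] [<-]; move: zM.
rewrite inE => /andP[zS /forallP H]; split => // j' j'S.
by move/implyP: (H j'); apply.
Qed.

Lemma sel_none (S : {set 'I_m}) y : y \in S -> sel S <> None.
Proof.
move=> yS.
pose M := [set j in S | [forall j' in S, u j' <= u j]].
have [z zS zmax] : exists2 z, z \in S & forall j', j' \in S -> u j' <= u z.
  case: (@arg_maxP _ R _ y (fun j => j \in S) u yS) => z zS zmax.
  by exists z.
have zM : z \in M by rewrite inE zS; apply/forallP => j'; apply/implyP; apply: zmax.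
case: (@arg_minnP _ z (fun j => j \in M) (fun j => nat_of_ord (pr j)) zM) => z' z'M z'min.
rewrite /select; case: pickP => // /(_ z') /=.
rewrite -/M z'M /= => /negP; case; apply/forallP => j'; apply/implyP => j'M.
exact: z'min.
Qed.

Lemma sel_sub (S S' : {set 'I_m}) y : S \subset S' -> sel S' = Some y -> y \in S -> sel S = Some y.
Proof.
move=> sSS' hy yS.
have [yS' ymax] := @sel_some S' y hy.
have MM : forall j, j \in [set j in S | [forall j' in S, u j' <= u j]] ->
   j \in [set j in S' | [forall j' in S', u j' <= u j]].
  move=> j; rewrite !inE => /andP[jS /forallP H].
  rewrite (fintype.subsetP sSS' _ jS) /=; apply/forallP => j'; apply/implyP => j'S'.
  apply: le_trans (ymax _ j'S') _.
  by move/implyP: (H y); apply.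
move: hy; rewrite /select.
case: pickP => // z /andP[zM zmin] [ezy]; subst z.
have yM : y \in [set j in S | [forall j' in S, u j' <= u j]].
  rewrite inE yS /=; apply/forallP => j'; apply/implyP => j'S.
  exact: ymax (fintype.subsetP sSS' _ j'S).
case: pickP.
  move=> z /andP[zM' zmin']; congr Some.
  have h1 : (nat_of_ord (pr z) <= nat_of_ord (pr y))%N by move/forallP: zmin' => /(_ y) /implyP; apply.
  have h2 : (nat_of_ord (pr y) <= nat_of_ord (pr z))%N by move/forallP: zmin => /(_ z) /implyP; apply; apply: MM.
  have : pr z = pr y by apply: val_inj; apply/eqP; rewrite eqn_leq h1 h2.
  exact: perm_inj.
move=> /(_ y); rewrite yM /= => /negP; case; apply/forallP => j'; apply/implyP => j'M.
by move/forallP: zmin => /(_ j') /implyP; apply; apply: MM.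
Qed.

End Sel.
Arguments sel_some {R m alpha b pr w tk S y}.
Arguments sel_none {R m alpha b pr w tk S y}.
Arguments sel_sub {R m alpha b pr w tk S S' y}.

Lemma setU1_in (T : finType) (x : T) (A : {set T}) : x \in A -> x |: A = A.
Proof. by move=> xA; apply/setP => z; rewrite !inE; case: eqP => // ->. Qed.

Lemma setU1D1 (T : finType) (x : T) (A : {set T}) : x \notin A -> (x |: A) :\ x = A.
Proof. by move=> xA; apply/setP => z; rewrite !inE; case: (eqVneq z x) => [->|] //=; rewrite (negbTE xA). Qed.

Lemma setU1D1' (T : finType) (x y : T) (A : {set T}) : y != x -> (x |: A) :\ y = x |: (A :\ y).
Proof. by move=> yx; apply/setP => z; rewrite !inE; case: (eqVneq z x) => [->|] //=; rewrite eq_sym yx. Qed.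

Definition inv {T : finType} (S S' : {set T}) := S' = S \/ exists x, S' = x |: S.

Lemma inv_sub (T : finType) (S S' : {set T}) : inv S S' -> S \subset S'.
Proof. by case=> [->|[x ->]] //; apply/fintype.subsetP => z; rewrite !inE => ->; rewrite orbT. Qed.

Section Step.
Variables (R : realType) (n m : nat) (alpha : R -> R) (b : 'I_m -> R)
  (pr : 'I_n -> {perm 'I_m}) (tau : 'I_n -> R) (v : 'I_n -> 'I_m -> R).
Local Notation st := (step alpha b pr tau v).

Lemma step_self S k : inv (st S k) S.
Proof.
rewrite /step; case E: (select _ _ _ _ _ _) => [z|]; last by left.
case: ifP => _; last by left.
have [zS _] := sel_some E.
by right; exists z; rewrite finset.setD1K.
Qed.

Lemma step_inv S S' k : inv S S' -> inv (st S k) (st S' k).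
Proof.
case => [->|[x ->]]; first by left.
case xS: (x \in S); first by rewrite setU1_in //; left.
have sub : S \subset x |: S by apply: inv_sub; right; exists x.
rewrite /step; case E': (select _ _ _ _ _ (x |: S)) => [y|]; last first.
  by exfalso; apply: (sel_none (y:=x) _ E'); rewrite !inE eqxx.
have [yS' ymax] := sel_some E'.
case: (eqVneq y x) => [eyx|yx].
  subst y; case: ifP => ux.
    rewrite setU1D1 ?xS //.
    case E: (select _ _ _ _ _ _) => [z|]; last by left.
    case: ifP => _; last by left.
    have [zS _] := sel_some E.
    by right; exists z; rewrite finset.setD1K.
  case E: (select _ _ _ _ _ _) => [z|]; last by right; exists x.
  have [zS _] := sel_some E.
  have uzx := ymax z (fintype.subsetP sub _ zS).
  case: ifP => uz; last by right; exists x.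
  by move: ux; rewrite (le_trans uz uzx).
have yS : y \in S by move: yS'; rewrite !inE (negbTE yx).
rewrite (sel_sub sub E' yS).
case: ifP => _; right; exists x => //.
by rewrite setU1D1'.
Qed.

End Step.

Section Fold.
Variables (R : realType) (n m : nat) (alpha : R -> R) (b : 'I_m -> R)
  (pr : 'I_n -> {perm 'I_m}) (tau : 'I_n -> R) (v : 'I_n -> 'I_m -> R).
Local Notation st := (step alpha b pr tau v).

Lemma fold_inv L S S' : inv S S' -> inv (foldl st S L) (foldl st S' L).
Proof. by elim: L S S' => //= k L IH S S' h; apply: IH; apply: step_inv. Qed.

Lemma fold_drop (i : 'I_n) L S : uniq L ->
  foldl st S L \subset foldl st S (seq.filter (predC1 i) L).
Proof.
move=> uL; case iL: (i \in L); last first.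
  have -> : seq.filter (predC1 i) L = L.
    apply/all_filterP/allP => x xL /=; apply/eqP => exi; subst x.
    by rewrite xL in iL.
  exact: subxx.
case/splitPr: iL uL => L1 L2.
rewrite cat_uniq /= => /and4P[_ h iL2 _].
have iL1 : i \notin L1 by apply/negP => iL1; move: h; rewrite /= iL1.
have fid : forall L0, i \notin L0 -> seq.filter (predC1 i) L0 = L0.
  move=> L0 iL0; apply/all_filterP/allP => x xL /=; apply/eqP => exi; subst x.
  by rewrite xL in iL0.
rewrite filter_cat /= eqxx /= !fid // !seq.foldl_cat /=.
apply: inv_sub; apply: fold_inv; exact: step_self.
Qed.

End Fold.

Section ArrOrder.
Variables (R : realType) (n : nat) (tau : 'I_n -> R).
Local Notation e := (arrives_before tau).

Lemma ab_total : total e.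
Proof.
move=> a c; rewrite /arrives_before.
case: (ltgtP (tau a) (tau c)) => //= _; exact: leq_total.
Qed.

Lemma ab_trans : transitive e.
Proof.
move=> y x z; rewrite /arrives_before.
move=> /orP[h1|/andP[/eqP e1 l1]] /orP[h2|/andP[/eqP e2 l2]]; apply/orP.
- by left; exact: lt_trans h1 h2.
- by left; rewrite -e2.
- by left; rewrite e1.
- by right; rewrite e1 e2 eqxx (leq_trans l1 l2).
Qed.

Lemma ab_anti : antisymmetric e.
Proof.
move=> x y; rewrite /arrives_before.
move=> /andP[/orP[h1|/andP[/eqP e1 l1]] /orP[h2|/andP[/eqP e2 l2]]].
- by move: (lt_trans h1 h2); rewrite ltxx.
- by move: h1; rewrite e2 ltxx.
- by move: h2; rewrite e1 ltxx.
- by apply/val_inj/eqP; rewrite eqn_leq l1 l2.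
Qed.
End ArrOrder.

Lemma arrivals_drop (R : realType) (n : nat) (tau : 'I_n -> R) (t : R) (i : 'I_n) :
  arrivals_before (fun k => if k == i then t else tau k) t =
  seq.filter (predC1 i) (arrivals_before tau t).
Proof.
set tau' := (fun k => if k == i then t else tau k).
rewrite /arrivals_before filter_sort; [|exact: ab_total|exact: ab_trans].
have -> : [seq k <- [seq k <- enum 'I_n | tau k < t] | predC1 i k] =
          [seq k <- enum 'I_n | tau' k < t].
  rewrite -filter_predI; apply: eq_filter => k /=; rewrite /tau'.
  by case: eqP => //= _; rewrite ltxx.
set Y := [seq k <- enum 'I_n | tau' k < t].
have YP : all (predC1 i) Y.
  apply/allP => k; rewrite mem_filter /tau' /=; case: (eqVneq k i) => //.
  by rewrite ltxx.
apply: (@sorted_eq _ (arrives_before tau)); [exact: ab_trans|exact: ab_anti| | |].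
- rewrite (@eq_in_sorted _ (predC1 i) _ (arrives_before tau')).
  + apply: sort_sorted; exact: ab_total.
  + move=> a c /= ai ci; rewrite /arrives_before /tau' (negbTE ai) (negbTE ci).
    by [].
  + by apply/allP => k; rewrite mem_sort => /(allP YP).
- apply: sort_sorted; exact: ab_total.
- by rewrite perm_sort perm_sym perm_sort.
Qed.

Lemma unsold_mono (R : realType) (n m : nat) (alpha : R -> R) (b : 'I_m -> R)
  (pr : 'I_n -> {perm 'I_m}) (tau : 'I_n -> R) (v : 'I_n -> 'I_m -> R)
  (t : R) (i : 'I_n) :
  unsold_before alpha b pr tau v t \subset
  unsold_before alpha b pr (fun k => if k == i then t else tau k) v t.
Proof.
rewrite /unsold_before arrivals_drop.
have fext : forall L S, all (predC1 i) L ->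
    foldl (step alpha b pr (fun k => if k == i then t else tau k) v) S L =
    foldl (step alpha b pr tau v) S L.
  elim=> //= k L IH S /andP[ki aL]; rewrite IH //.
  by rewrite /step (negbTE ki).
rewrite fext; last by apply/allP => k; rewrite mem_filter => /andP[].
apply: fold_drop.
by rewrite sort_uniq filter_uniq // enum_uniq.
Qed.

Lemma unsold_cong (R : realType) (n m : nat) (alpha : R -> R) (b : 'I_m -> R)
  (pr : 'I_n -> {perm 'I_m}) (tau1 tau2 : 'I_n -> R) (v1 v2 : 'I_n -> 'I_m -> R)
  (t : R) :
  (forall k j1 j2, (util alpha b (v1 k) (tau1 k) j1 <= util alpha b (v1 k) (tau1 k) j2)
     = (util alpha b (v2 k) (tau2 k) j1 <= util alpha b (v2 k) (tau2 k) j2)) ->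
  (forall k j, (0 <= util alpha b (v1 k) (tau1 k) j) = (0 <= util alpha b (v2 k) (tau2 k) j)) ->
  (forall k, (tau1 k < t) = (tau2 k < t)) ->
  (forall a c, (tau1 a < tau1 c) = (tau2 a < tau2 c)) ->
  (forall a c, (tau1 a == tau1 c) = (tau2 a == tau2 c)) ->
  unsold_before alpha b pr tau1 v1 t = unsold_before alpha b pr tau2 v2 t.
Proof.
move=> H1 H2 H3 H4 H5.
rewrite /unsold_before /arrivals_before.
have -> : [seq k <- enum 'I_n | tau1 k < t] = [seq k <- enum 'I_n | tau2 k < t].
  by apply: eq_filter => k; rewrite H3.
have -> : arrives_before tau1 = arrives_before tau2.
  by apply: boolp.funext => a; apply: boolp.funext => c; rewrite /arrives_before H4 H5.
have -> : step alpha b pr tau1 v1 = step alpha b pr tau2 v2; last by [].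
apply: boolp.funext => S; apply: boolp.funext => k.
rewrite /step /select.
have -> : [set j in S | [forall j' in S, util alpha b (v1 k) (tau1 k) j' <= util alpha b (v1 k) (tau1 k) j]]
        = [set j in S | [forall j' in S, util alpha b (v2 k) (tau2 k) j' <= util alpha b (v2 k) (tau2 k) j]].
  apply/setP => x; rewrite !inE; congr (_ && _); apply: eq_forallb => j'.
  by rewrite H1.
by case: pickP => // z _; rewrite H2.
Qed.

Import measurable_realfun.
Set Implicit Arguments. Unset Strict Implicit.

Section M.
Variables (d : measure_display) (Omega : measurableType d).

Definition ptmeas {F : finType} (f : Omega -> F) :=
  forall y, measurable (f @^-1` [set y]).

Lemma fin_pre (F : finType) (f : Omega -> F) : ptmeas f ->
  forall A, measurable (f @^-1` A).
Proof.
move=> hf A.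
have -> : f @^-1` A = \bigcup_(y in A) f @^-1` [set y].
  by apply/seteqP; split => w /=; [move=> h; exists (f w) | case=> y Ay ->].
apply: fin_bigcup_measurable; first exact: finite_finset.
by move=> y _; apply: hf.
Qed.

Lemma pair_pre (F G : finType) (f : Omega -> F) (g : Omega -> G) :
  ptmeas f -> ptmeas g -> ptmeas (fun w => (f w, g w)).
Proof.
move=> hf hg [a c].
have -> : (fun w => (f w, g w)) @^-1` [set (a, c)] = f @^-1` [set a] `&` g @^-1` [set c].
  apply/seteqP; split => w /=; first by case=> -> ->.
  by case=> -> ->.
exact: measurableI.
Qed.

Lemma ffun_pre (X : finType) (h : Omega -> X -> bool) :
  (forall x, measurable [set w | h w x]) ->
  ptmeas (fun w => [ffun x => h w x]).
Proof.
move=> hh y.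
have -> : (fun w => [ffun x => h w x]) @^-1` [set y] =
          \bigcap_(x in [set: X]) [set w | h w x = y x].
  apply/seteqP; split => w /=.
    by move=> <- x _; rewrite ffunE.
  by move=> H; apply/ffunP => x; rewrite ffunE; exact: H x I.
apply: fin_bigcap_measurable; first exact: finite_finset.
move=> x _; case: (y x).
  have -> : [set w | h w x = true] = [set w | h w x] by [].
  exact: hh.
have -> : [set w | h w x = false] = ~` [set w | h w x].
  by apply/seteqP; split => w /=; case: (h w x).
exact/measurableC/hh.
Qed.

Lemma bool_meas (f : Omega -> bool) : measurable_fun setT f -> measurable [set w | f w].
Proof.
move=> mf; have := mf measurableT [set true] I.
by rewrite setTI.
Qed.

End M.

Lemma util_meas d (Omega : measurableType d) (R : realType) (m : nat) (alpha : R -> R) (b : 'I_m -> R)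
  (x : Omega -> R) (vv : 'I_m -> Omega -> R) (j : 'I_m) :
  measurable_fun setT alpha -> measurable_fun setT x -> (forall l, measurable_fun setT (vv l)) ->
  measurable_fun setT (fun w => util alpha b (fun l => vv l w) (x w) j).
Proof.
move=> ha hx hv; rewrite /util.
apply: (measurable_funB (hv j)).
apply: (measurable_funM (measurableT_comp ha hx)).
exact: measurable_cst.
Qed.

Lemma unsold_meas d (Omega : measurableType d) (R : realType) (n m : nat)
  (alpha : R -> R) (b : 'I_m -> R) (pr : 'I_n -> {perm 'I_m})
  (tau : 'I_n -> Omega -> R) (v : 'I_n -> 'I_m -> Omega -> R) (t : R) (j : 'I_m) :
  measurable_fun setT alpha -> (forall k, measurable_fun setT (tau k)) ->
  (forall k l, measurable_fun setT (v k l)) ->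
  measurable [set w | j \in unsold_before alpha b pr (fun k => tau k w) (fun k l => v k l w) t].
Proof.
move=> ha ht hv.
pose U k w j1 := util alpha b (fun l => v k l w) (tau k w) j1.
pose bits w := ([ffun p : 'I_n * 'I_m * 'I_m => U p.1.1 w p.1.2 <= U p.1.1 w p.2],
  [ffun p : 'I_n * 'I_m => 0 <= U p.1 w p.2],
  [ffun k : 'I_n => tau k w < t],
  [ffun p : 'I_n * 'I_n => tau p.1 w < tau p.2 w],
  [ffun p : 'I_n * 'I_n => tau p.1 w == tau p.2 w]).
have Um : forall k j1, measurable_fun setT (fun w => U k w j1).
  by move=> k j1; apply: util_meas.
have pb : ptmeas bits.
  apply: pair_pre; [apply: pair_pre; [apply: pair_pre; [apply: pair_pre|]|]|];
    apply: ffun_pre => p; apply: bool_meas.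
  - exact: measurable_fun_ler.
  - exact: measurable_fun_ler (measurable_cst _) (Um _ _).
  - exact: measurable_fun_ltr (ht _) (measurable_cst _).
  - exact: measurable_fun_ltr.
  - exact: measurable_fun_eqr.
set E := [set w | _].
have -> : E = bits @^-1` [set be | exists w', bits w' = be /\ E w'].
  apply/seteqP; split => w /=; first by move=> Ew; exists w.
  case=> w' [hb Ew']; rewrite /E /=.
  move: hb => -[e1 e2 e3 e4 e5].
  rewrite (@unsold_cong R n m alpha b pr (fun k => tau k w) (fun k => tau k w')
       (fun k l => v k l w) (fun k l => v k l w')) //.
  - move=> k j1 j2.
    by have := congr1 (fun f : {ffun _ -> bool} => f (k, j1, j2)) e1; rewrite !ffunE /U => ->.
  - move=> k j1.
    by have := congr1 (fun f : {ffun _ -> bool} => f (k, j1)) e2; rewrite !ffunE /U => ->.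
  - move=> k.
    by have := congr1 (fun f : {ffun _ -> bool} => f k) e3; rewrite !ffunE /U => ->.
  - move=> a c.
    by have := congr1 (fun f : {ffun _ -> bool} => f (a, c)) e4; rewrite !ffunE /U => ->.
  - move=> a c.
    by have := congr1 (fun f : {ffun _ -> bool} => f (a, c)) e5; rewrite !ffunE /U => ->.
exact: fin_pre.
Qed.

Unset Implicit Arguments.

Theorem lemma3 (d : measure_display) (Omega : measurableType d) (R : realType)
  (P : probability Omega R) (n m : nat)
  (v : 'I_n -> 'I_m -> Omega -> R) (T : 'I_n -> Omega -> R)
  (b : 'I_m -> R) (alpha : R -> R) (pr : 'I_n -> {perm 'I_m}) :
  (forall i j, measurable_fun setT (v i j)) ->
  (forall i, measurable_fun setT (T i)) ->
  (forall i j w, 0 <= v i j w) ->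
  indep_model P v T ->
  (forall i, uniform01 P (T i)) ->
  (forall j, 0 <= b j) ->
  (forall s, 0 <= s <= 1 -> 0 <= alpha s <= 1) ->
  measurable_fun setT alpha ->
  forall (i : 'I_n) (j : 'I_m) (t : R), 0 <= t <= 1 ->
    (q_unsold P alpha b pr v T j t
       <= q_unsold_given_arrival P alpha b pr v T i j t)%E.
Proof.
move=> hv hT _ _ _ _ _ ha i j t _.
rewrite /q_unsold /q_unsold_given_arrival.
apply: le_measure; rewrite ?inE.
- exact: (@unsold_meas d Omega R n m alpha b pr T v t j ha hT hv).
- apply: (@unsold_meas d Omega R n m alpha b pr
     (fun k w => if k == i then t else T k w) v t j ha _ hv).
  by move=> k; case: (k == i); [exact: measurable_cst | exact: hT].
- move=> w /= h.
  exact: (fintype.subsetP (@unsold_mono R n m alpha b pr (fun k => T k w) (fun k l => v k l w) t i) j h).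
Qed.
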